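(* Let $\delta\in(0,1)$ and let $T$ be a bounded operator on a Hilbert space $\mathcal{H}$ with $\overline{W(T)}\subseteq G_\delta$. Then for every $\omega\in\mathbb{T}$, $\|\Psi_\omega(T)\|\le1$. Moreover, for all $\omega\in\mathbb{T}$, $$\|\Psi_\omega\|_{\mathrm{bfd}}=1=\sup_{\lambda\in G_\delta}|\Psi_\omega(\lambda)|.$$
   Context: $G_\delta=\{x+iy: x,y\in\mathbb{R},\ \frac{x^2}{(1+\delta)^2}+\frac{y^2}{(1-\delta)^2}<1\}$. $W(T)=\{\langle Tx,x\rangle:\|x\|=1\}$ is the numerical range. For $\omega\in\mathbb{T}$, $\Psi_\omega(\lambda)=\frac{2\omega\delta-\lambda}{2-\omega\lambda}$ on $G_\delta$, and $\Psi_\omega(T)$ is defined by the Riesz–Dunford calculus (the spectrum of $T$ lies in $\overline{W(T)}$). For holomorphic $\phi$ on $G_\delta$, $\|\phi\|_{\mathrm{bfd}}=\sup\{\|\phi(T)\|: T \text{ a bounded Hilbert space operator with } \overline{W(T)}\subseteq G_\delta\}$. *)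

(* Defs.v *)
From HB Require Import structures.
From mathcomp Require Import all_boot all_order all_algebra.
From mathcomp Require Import all_classical all_reals all_analysis.
From mathcomp Require Import complex.
Set Implicit Arguments. Unset Strict Implicit. Unset Printing Implicit Defensive.
Import Order.TTheory GRing.Theory Num.Theory.
Import numFieldNormedType.Exports.
Local Open Scope ring_scope.
Local Open Scope classical_set_scope.

Definition is_inner_product (R : realType) (V : lmodType R[i])
    (ip : V -> V -> R[i]) : Prop :=
  [/\ (forall (a : R[i]) (x y z : V), ip (a *: x + y) z = a * ip x z + ip y z),
      (forall x y : V, ip x y = (ip y x)^*),
      (forall x : V, 0 <= ip x x) &
      (forall x : V, ip x x = 0 -> x = 0)].

Definition hnorm (R : realType) (V : lmodType R[i]) (ip : V -> V -> R[i])
    (x : V) : R := Num.sqrt (complex.Re (ip x x)).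

Definition ip_complete (R : realType) (V : lmodType R[i])
    (ip : V -> V -> R[i]) : Prop :=
  forall u : nat -> V,
    (forall e : R, 0 < e -> exists N : nat, forall m n : nat, (N <= m)%N -> (N <= n)%N ->
        hnorm ip (u m - u n) < e) ->
    exists l : V, forall e : R, 0 < e -> exists N : nat, forall n : nat, (N <= n)%N ->
        hnorm ip (u n - l) < e.

Definition is_hilbert (R : realType) (V : lmodType R[i]) (ip : V -> V -> R[i]) : Prop :=
  is_inner_product ip /\ ip_complete ip.

Definition bounded_op (R : realType) (V : lmodType R[i]) (ip : V -> V -> R[i])
    (T : V -> V) : Prop :=
  exists M : R, forall x : V, hnorm ip (T x) <= M * hnorm ip x.

Definition numrange (R : realType) (V : lmodType R[i]) (ip : V -> V -> R[i])
    (T : V -> V) : set R[i] :=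
  [set ip (T x) x | x in [set x : V | hnorm ip x = 1]].

Definition G_delta (R : realType) (delta : R) : set R[i] :=
  [set z : R[i] | (complex.Re z) ^+ 2 / (1 + delta) ^+ 2
                  + (complex.Im z) ^+ 2 / (1 - delta) ^+ 2 < 1].

Definition closW_in_G (R : realType) (delta : R) (V : lmodType R[i])
    (ip : V -> V -> R[i]) (T : V -> V) : Prop :=
  closure (numrange ip T : set R[i]^o) `<=` (G_delta delta : set R[i]^o).

Definition admissible (R : realType) (delta : R) (V : lmodType R[i])
    (ip : V -> V -> R[i]) (T : V -> V) : Prop :=
  [/\ is_hilbert ip, linear T, bounded_op ip T & closW_in_G delta ip T].

Definition Psi (R : realType) (delta : R) (omega lambda : R[i]) : R[i] :=
  (2 * omega * (delta%:C)%C - lambda) / (2 - omega * lambda).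

(* Psi_omega(T) = (2 omega delta - T)(2 - omega T)^{-1}: the value of the    *)
(* Riesz-Dunford calculus at the rational function Psi_omega, whose pole     *)
(* 2/omega lies outside the spectrum.  y is sent to (2 omega delta - T) x    *)
(* where x is the preimage of y under 2 - omega T.                           *)
Definition Psi_op (R : realType) (delta : R) (omega : R[i]) (V : lmodType R[i])
    (T : V -> V) : V -> V :=
  fun y => let x := xget 0 [set x : V | 2 *: x - omega *: T x = y] in
           (2 * omega * (delta%:C)%C) *: x - T x.

(* invertibility of 2 - omega T (needed for Psi_omega(T) to be defined) *)
Definition resolvent_ok (R : realType) (omega : R[i]) (V : lmodType R[i])
    (T : V -> V) : Prop :=
  bijective (fun x : V => 2 *: x - omega *: T x).

Definition opnorm (R : realType) (V : lmodType R[i]) (ip : V -> V -> R[i])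
    (A : V -> V) : \bar R :=
  ereal_sup [set ((hnorm ip (A y))%:E)%E | y in [set y : V | hnorm ip y <= 1]].

Definition bfd_norm_Psi (R : realType) (delta : R) (omega : R[i]) : \bar R :=
  ereal_sup [set r : \bar R | exists (V : lmodType R[i]) (ip : V -> V -> R[i])
                                     (T : V -> V),
               admissible delta ip T /\ r = opnorm ip (Psi_op delta omega T)].

Definition cmod (R : realType) (z : R[i]) : R :=
  Num.sqrt (complex.Re z ^+ 2 + complex.Im z ^+ 2).

Definition sup_Psi_G (R : realType) (delta : R) (omega : R[i]) : \bar R :=
  ereal_sup [set ((cmod (Psi delta omega lambda))%:E)%E
            | lambda in G_delta delta].

(* Main.v *)
Require Import Defs.
From HB Require Import structures.
From mathcomp Require Import all_boot all_order all_algebra.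
From mathcomp Require Import all_classical all_reals all_analysis.
From mathcomp Require Import complex.
From mathcomp Require Import ring lra.
Import Order.TTheory GRing.Theory Num.Theory.
Import numFieldNormedType.Exports.
Local Open Scope ring_scope.
Local Open Scope classical_set_scope.

Lemma conjE (R : realType) (x : R[i]) : Num.conj x = conjc x.
Proof.
rewrite [x in LHS]Crect conjC_rect ?Creal_Re ?Creal_Im // -complexRe -complexIm.
by case: x => a b; rewrite -complexiE; simpc.
Qed.

Section IP.
Context {R : realType} {V : lmodType R[i]} {ip : V -> V -> R[i]}.
Hypothesis hip : is_inner_product ip.

Let N x := complex.Re (ip x x).

Lemma ipDZ a x y z : ip (a *: x + y) z = a * ip x z + ip y z.
Proof. by case: hip. Qed.

Lemma ip0l z : ip 0 z = 0.
Proof.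
have := ipDZ 1 0 0 z; rewrite scaler0 !addr0 mul1r => h.
by rewrite -[LHS]addr0 in h; exact/esym/(addrI _ h).
Qed.

Lemma ipDl x y z : ip (x + y) z = ip x z + ip y z.
Proof. by rewrite -[x]scale1r ipDZ mul1r scale1r. Qed.

Lemma ipZl a x z : ip (a *: x) z = a * ip x z.
Proof. by rewrite -[a *: x]addr0 ipDZ ip0l addr0. Qed.

Lemma ipNl x z : ip (- x) z = - ip x z.
Proof. by rewrite -scaleN1r ipZl mulN1r. Qed.

Lemma ipC x y : ip x y = Num.conj (ip y x).
Proof. by case: hip. Qed.

Lemma ipDr x y z : ip z (x + y) = ip z x + ip z y.
Proof. by rewrite ipC ipDl rmorphD /= -!ipC. Qed.

Lemma ipZr a x z : ip z (a *: x) = Num.conj a * ip z x.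
Proof. by rewrite ipC ipZl rmorphM /= -!ipC. Qed.

Lemma ip0r z : ip z 0 = 0.
Proof. by rewrite ipC ip0l rmorph0. Qed.

Lemma ipNr x z : ip z (- x) = - ip z x.
Proof. by rewrite ipC ipNl rmorphN /= -!ipC. Qed.

Lemma ipxx_ge0 x : 0 <= ip x x.
Proof. by case: hip. Qed.

Lemma ipxx_real x : ip x x = (N x)%:C%C.
Proof.
have := ipxx_ge0 x; rewrite /N; case: (ip x x) => a b.
rewrite lecE /= => /andP[/eqP hb _].
by rewrite hb.
Qed.

Lemma N_ge0 x : 0 <= N x.
Proof. by have := ipxx_ge0 x; rewrite ipxx_real lecR. Qed.

Lemma N_eq0 x : N x = 0 -> x = 0.
Proof. by move=> h; case: hip => _ _ _; apply; rewrite ipxx_real h. Qed.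

Lemma expandN x y a b :
  N (a *: x + b *: y) =
    (complex.Re a ^+ 2 + complex.Im a ^+ 2) * N x
  + (complex.Re b ^+ 2 + complex.Im b ^+ 2) * N y
  + 2 * ((complex.Re a * complex.Re b + complex.Im a * complex.Im b) * complex.Re (ip x y)
       - (complex.Im a * complex.Re b - complex.Re a * complex.Im b) * complex.Im (ip x y)).
Proof.
rewrite /N ipDl !ipZl !ipDr !ipZr [ip y x]ipC !ipxx_real -/(N x) -/(N y) !conjE.
move: (ip x y) (N x) (N y) => w nx ny.
case: a => a1 a2; case: b => b1 b2; case: w => w1 w2 /=.
simpc => /=. ring.
Qed.


Lemma expandNr x y (a b : R) :
  N (a%:C%C *: x + b%:C%C *: y) = a ^+ 2 * N x + b ^+ 2 * N y + 2 * (a * b) * complex.Re (ip x y).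
Proof. rewrite expandN /=; ring. Qed.

Lemma NZ (a : R) x : N (a%:C%C *: x) = a ^+ 2 * N x.
Proof.
have := expandNr x 0 a 0; rewrite scaler0 addr0 => ->.
rewrite /N ip0l ip0r /=; ring.
Qed.

Lemma hnormE x : hnorm ip x = Num.sqrt (N x). Proof. by []. Qed.

Lemma hnorm_ge0 x : 0 <= hnorm ip x. Proof. exact: sqrtr_ge0. Qed.

Lemma hnorm_sq x : hnorm ip x ^+ 2 = N x.
Proof. by rewrite hnormE sqr_sqrtr // N_ge0. Qed.

Lemma hnorm_eq0 x : hnorm ip x = 0 -> x = 0.
Proof.
move=> h; apply: N_eq0; rewrite -hnorm_sq h; ring.
Qed.

Lemma hnorm_le x y : N x <= N y -> hnorm ip x <= hnorm ip y.
Proof. exact: ler_wsqrtr. Qed.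

Lemma CS x y : complex.Re (ip x y) <= hnorm ip x * hnorm ip y.
Proof.
have [y0|yn0] := eqVneq (hnorm ip y) 0.
  by rewrite y0 mulr0 (hnorm_eq0 y y0) ip0r.
have hy : 0 < hnorm ip y by rewrite lt_neqAle eq_sym yn0 hnorm_ge0.
have := N_ge0 (1%:C%C *: x + (- (hnorm ip x / hnorm ip y))%:C%C *: y).
rewrite expandNr -!hnorm_sq => h.
have hx := hnorm_ge0 x.
set hX := hnorm ip x in h hx *; set hY := hnorm ip y in h hy yn0 *.
have e : (- (hX / hY)) ^+ 2 * hY ^+ 2 = hX ^+ 2 by field.
rewrite e in h.
have : 0 <= 2 * hX ^+ 2 - 2 * (hX / hY) * complex.Re (ip x y) by lra.
move=> h2.
have : 0 <= (2 * hX ^+ 2 - 2 * (hX / hY) * complex.Re (ip x y)) * hY by apply: mulr_ge0 => //; exact: ltW.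
have -> : (2 * hX ^+ 2 - 2 * (hX / hY) * complex.Re (ip x y)) * hY = 2 * hX * (hX * hY - complex.Re (ip x y)) by field.
move=> h3; have [hx0|hxp] := eqVneq hX 0.
  by rewrite hx0 mul0r (hnorm_eq0 x hx0) ip0l.
have hxp' : 0 < hX by rewrite lt_neqAle eq_sym hxp hx.
rewrite pmulr_rge0 in h3; [lra| lra].
Qed.

Lemma hnormD x y : hnorm ip (x + y) <= hnorm ip x + hnorm ip y.
Proof.
have hx := hnorm_ge0 x; have hy := hnorm_ge0 y.
rewrite hnormE -(ger0_norm (addr_ge0 hx hy)) -sqrtr_sqr; apply: ler_wsqrtr.
have := expandNr x y 1 1; rewrite rmorph1 !scale1r => ->.
have := CS x y; rewrite -!hnorm_sq; nra.
Qed.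

Lemma hnormN x : hnorm ip (- x) = hnorm ip x.
Proof.
by rewrite !hnormE -scaleN1r -(rmorph1 (real_complex R)) -rmorphN NZ expr2 mulN1r opprK mul1r.
Qed.

Lemma hnormB x y : hnorm ip (x - y) = hnorm ip (y - x).
Proof. by rewrite -hnormN opprB. Qed.

End IP.

Lemma RL1 {R : realType} {p q C D n : R} : p^+2+q^+2 = 1 -> C^+2 + D^+2 <= n^+2 -> 0 <= n -> p*C - q*D <= n.
Proof.
move=> h1 h2 h3.
have h4 : (p*C - q*D)^+2 <= n^+2.
  have e : (p*C - q*D)^+2 + (p*D + q*C)^+2 = (p^+2+q^+2) * (C^+2+D^+2) by ring.
  rewrite h1 mul1r in e. have := sqr_ge0 (p*D + q*C). lra.
nra.
Qed.

Lemma RL2 {R : realType} {dl p q c d n : R} : 0 < dl < 1 -> p^+2+q^+2 = 1 ->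
  c^+2/(1+dl)^+2 + d^+2/(1-dl)^+2 <= n^+2 -> 0 <= n ->
  `|p*c - q*d| <= (1+dl) * n.
Proof.
move=> /andP[d0 d1] h1 h2 h3.
set C := c / (1+dl); set D := d / (1-dl).
have hc : c = (1+dl) * C by rewrite /C; field; lra.
have hd : d = (1-dl) * D by rewrite /D; field; lra.
have h2' : C^+2 + D^+2 <= n^+2 by move: h2; rewrite /C /D !expr_div_n.
have e : (p*c - q*d)^+2 + (p*d + q*c)^+2 = (p^+2+q^+2) * (c^+2+d^+2) by ring.
rewrite h1 mul1r in e.
have h5 : c^+2 + d^+2 <= (1+dl)^+2 * n^+2.
  rewrite hc hd.
  have : (1-dl)^+2 <= (1+dl)^+2 by nra.
  have := sqr_ge0 D; have := sqr_ge0 C. nra.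
have h6 : (p*c - q*d)^+2 <= ((1+dl)*n)^+2 by have := sqr_ge0 (p*d + q*c); rewrite exprMn; lra.
rewrite -ler_sqr ?nnegrE ?normr_ge0 //; first by rewrite real_normK ?num_real.
apply: mulr_ge0 => //; lra.
Qed.

Lemma ReMC {R : realType} (a : R) (w : R[i]) : complex.Re (a%:C%C * w) = a * complex.Re w.
Proof. by case: w => w1 w2; rewrite -complexr0; simpc. Qed.
Lemma ImMC {R : realType} (a : R) (w : R[i]) : complex.Im (a%:C%C * w) = a * complex.Im w.
Proof. by case: w => w1 w2; rewrite -complexr0; simpc; rewrite /= mulrC. Qed.
Lemma ReJ {R : realType} (w : R[i]) : complex.Re (Num.conj w) = complex.Re w.
Proof. by rewrite conjE; case: w. Qed.
Lemma ImJ {R : realType} (w : R[i]) : complex.Im (Num.conj w) = - complex.Im w.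
Proof. by rewrite conjE; case: w. Qed.
Lemma two_C {R : realType} : (2 : R[i]) = 2%:C%C.
Proof. by rewrite rmorphMn /= rmorph1. Qed.

Lemma geo_small {R : realType} (q : R) : 0 <= q < 1 -> forall e, 0 < e -> exists N : nat, q ^+ N < e.
Proof.
case/andP => q0 q1 e e0.
have : `|q| < 1 by rewrite ger0_norm.
move/cvg_expr/cvgrPdist_lt/(_ e e0) => [N _ HN].
exists N; have := HN N (leqnn N); rewrite /= sub0r normrN ger0_norm //.
exact: exprn_ge0.
Qed.

Lemma small_pos {R : realType} (r : R) : 0 < r -> r < r / 4 + r / 4 -> False.
Proof. move=> h1 h2; lra. Qed.

Section Z. Variable V : zmodType.

Lemma zm1 (a b : V) : a - (a - b) = b. Proof. by rewrite opprB addrC subrK. Qed.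
Lemma zm2 (a b c d : V) : (a - b) - (c - d) = (a - c) - (b - d).
Proof. by rewrite !opprB addrACA [RHS]addrACA [- c + _]addrC. Qed.
Lemma zm3 (a b z : V) : (a + z) - (b + z) = a - b.
Proof. by rewrite opprD addrACA subrr addr0. Qed.
Lemma zm4 (a b c : V) : (a - b) + (b - c) = a - c.
Proof. by rewrite addrA subrK. Qed.
Lemma zm5 (l bl bx z : V) : l - bl - z = (l - (bx + z)) + (bx - bl).
Proof. by rewrite [bx + z]addrC opprD [l + (_ + _)]addrA zm4 addrAC. Qed.
End Z.

Section Op.
Variables (R : realType) (dl : R) (V : lmodType R[i]) (ip : V -> V -> R[i]) (T : V -> V) (M : R) (om : R[i]).
Hypothesis hip : is_inner_product ip.
Hypothesis hT : linear T.
Hypothesis hM : forall x, hnorm ip (T x) <= M * hnorm ip x.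
Hypothesis hW : forall x, hnorm ip x = 1 -> G_delta dl (ip (T x) x).
Hypothesis hd : 0 < dl < 1.
Hypothesis hom : complex.Re om ^+ 2 + complex.Im om ^+ 2 = 1.

Let N x := complex.Re (ip x x).

Lemma TD x y : T (x + y) = T x + T y.
Proof. by rewrite -[x]scale1r hT !scale1r. Qed.
Lemma T0 : T 0 = 0.
Proof.
have := TD 0 0; rewrite addr0 => h.
by rewrite -[LHS]addr0 in h; exact/esym/(addrI _ h).
Qed.
Lemma TZ a x : T (a *: x) = a *: T x.
Proof. by rewrite -[a *: x]addr0 hT T0 addr0. Qed.
Lemma TN x : T (- x) = - T x.
Proof. by rewrite -scaleN1r TZ scaleN1r. Qed.
Lemma TB x y : T (x - y) = T x - T y.
Proof. by rewrite TD TN. Qed.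

Lemma ellipse x :
  complex.Re (ip (T x) x) ^+ 2 / (1 + dl) ^+ 2 + complex.Im (ip (T x) x) ^+ 2 / (1 - dl) ^+ 2 <= N x ^+ 2.
Proof.
have [n0|n0] := eqVneq (N x) 0.
  rewrite (N_eq0 hip _ n0) T0 /N (ip0l hip).
  have -> : complex.Re (0:R[i]) = 0 by [].
  have -> : complex.Im (0:R[i]) = 0 by [].
  rewrite expr0n /= !mul0r addr0; lra.
have np : 0 < N x by rewrite lt_neqAle eq_sym n0 N_ge0.
set s := (Num.sqrt (N x))^-1.
have ss : s * s * N x = 1.
  rewrite /s -invfM -expr2 sqr_sqrtr ?mulVf //; exact: ltW.
have h1 : hnorm ip (s%:C%C *: x) = 1 by rewrite hnormE (NZ hip) expr2 ss sqrtr1.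
have := hW _ h1; rewrite /G_delta /= TZ (ipZl hip) (ipZr hip) conjE conjc_real mulrA -rmorphM /=.
rewrite ReMC ImMC.
set c := complex.Re _; set d := complex.Im _.
move=> h.
have e : (s * s * c) ^+ 2 / (1 + dl) ^+ 2 + (s * s * d) ^+ 2 / (1 - dl) ^+ 2 =
  (s*s)^+2 * (c ^+ 2 / (1 + dl) ^+ 2 + d ^+ 2 / (1 - dl) ^+ 2) by ring.
rewrite e in h.
set E := (c ^+ 2 / _ + _) in h *.
have e2 : E = (s*s)^+2 * E * (N x)^+2 by rewrite -mulrA mulrCA -exprMn ss expr1n mulr1.
rewrite e2; have := sqr_ge0 (N x); nra.
Qed.


Let p := complex.Re om.
Let q := complex.Im om.
Let cc x := complex.Re (ip (T x) x).
Let dd x := complex.Im (ip (T x) x).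

Lemma key1 x : (1-dl)*(p*cc x) - (1+dl)*(q*dd x) <= (1-dl^+2) * N x.
Proof.
have h := fun C D h2 => @RL1 _ p q C D _ hom h2 (N_ge0 hip x).
have h2 := ellipse x; rewrite -!expr_div_n in h2.
have := h _ _ h2; move: hd => /andP[d0 d1].
have e : (1-dl^+2) * (p * (cc x / (1 + dl)) - q * (dd x / (1 - dl))) = (1-dl)*(p*cc x) - (1+dl)*(q*dd x).
  rewrite /cc /dd; field; lra.
rewrite -e => h3. rewrite ler_pM2l //. nra.
Qed.

Lemma key2 x : `|p*cc x - q*dd x| <= (1+dl) * N x.
Proof. exact: (RL2 hd hom (ellipse x) (N_ge0 hip x)). Qed.

Lemma ReD (w z : R[i]) : complex.Re (w + z) = complex.Re w + complex.Re z. Proof. by case: w; case: z. Qed.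
Lemma ReN (w : R[i]) : complex.Re (- w) = - complex.Re w. Proof. by case: w. Qed.
Lemma ImN (w : R[i]) : complex.Im (- w) = - complex.Im w. Proof. by case: w. Qed.

Definition Aop x := 2 *: x - om *: T x.
Definition vop x := (2 * om * (dl%:C)%C) *: x - T x.

Lemma NA x : N (Aop x) = 4 * N x - 4 * (p * cc x - q * dd x) + N (T x).
Proof.
rewrite /N /Aop -scaleNr two_C (expandN hip) ReN ImN !sqrrN -/p -/q hom mul1r.
rewrite (ipC hip x (T x)) ReJ ImJ -/(cc x) -/(dd x) /=. ring.
Qed.

Lemma Nv x : N (vop x) = 4 * dl ^+ 2 * N x - 4 * dl * (p * cc x + q * dd x) + N (T x).
Proof.
have ea : 2 * om * dl%:C%C = (2*dl)%:C%C * om by rewrite two_C rmorphM /=; ring.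
rewrite /N /vop ea -scaleN1r -(rmorph1 (real_complex R)) -rmorphN (expandN hip) ReMC ImMC -/p -/q.
rewrite (ipC hip x (T x)) ReJ ImJ -/(cc x) -/(dd x) /=.
have e : ((2 * dl * p) ^+ 2 + (2 * dl * q) ^+ 2) = 4 * dl ^+ 2 * (p^+2 + q^+2) by ring.
rewrite e hom; ring.
Qed.

Lemma contr x : N (vop x) <= N (Aop x).
Proof.
rewrite NA Nv; have := key1 x; move: hd => /andP[d0 d1]; nra.
Qed.

Lemma coerc x : (1-dl) * N x <= complex.Re (ip (Aop x) x).
Proof.
rewrite /Aop (ipDl hip) (ipNl hip) !(ipZl hip) two_C (ipxx_real hip) ReD ReN.
rewrite -rmorphM /=.
have -> : complex.Re (om * ip (T x) x) = p * cc x - q * dd x.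
  by rewrite /p /cc /q /dd; case: om => a b; case: (ip (T x) x) => e f.
have := key2 x; rewrite ler_norml => /andP[_ h]. lra.
Qed.

Lemma NT_bound x : N (T x) <= M ^+ 2 * N x.
Proof.
rewrite /N -!(hnorm_sq hip).
have := hM x; have := @hnorm_ge0 _ _ ip (T x); have := @hnorm_ge0 _ _ ip x. nra.
Qed.

Lemma NA_bound x : N (Aop x) <= (12 + M ^+ 2) * N x.
Proof.
rewrite NA; have := key2 x; rewrite ler_norml => /andP[h _].
have := NT_bound x; have := N_ge0 hip x; move: hd => /andP[d0 d1]; nra.
Qed.


Let K := 12 + M ^+ 2.
Let t := (1 - dl) / K.
Let q2 := 1 - (1 - dl) ^+ 2 / K.
Let qq := Num.sqrt q2.
Definition Bop x := x - t%:C%C *: Aop x.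

Lemma K_gt0 : 0 < K.
Proof. rewrite /K; have := sqr_ge0 M; lra. Qed.
Lemma t_gt0 : 0 < t.
Proof. by rewrite /t divr_gt0 ?K_gt0 //; move: hd => /andP[_ h]; lra. Qed.
Lemma q2_ge0 : 0 <= q2.
Proof.
rewrite /q2 subr_ge0 ler_pdivrMr ?K_gt0 // mul1r /K.
move: hd => /andP[d0 d1]; have := sqr_ge0 M; nra.
Qed.
Lemma qq_ge0 : 0 <= qq. Proof. exact: sqrtr_ge0. Qed.
Lemma qq_lt1 : qq < 1.
Proof.
have h : q2 < 1.
  rewrite /q2 -[X in _ < X]subr0 ltrD2l ltrN2 divr_gt0 ?K_gt0 //.
  by apply: exprn_gt0; move: hd => /andP[_ h]; lra.
have := qq_ge0; have : qq ^+ 2 = q2 by rewrite sqr_sqrtr // q2_ge0.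
nra.
Qed.

Lemma AB x y : Aop (x - y) = Aop x - Aop y.
Proof. by rewrite /Aop TB scalerBr scalerBr zm2. Qed.

Lemma BB x y : Bop (x - y) = Bop x - Bop y.
Proof. by rewrite /Bop AB scalerBr zm2. Qed.

Lemma q2E : q2 = 1 - 2 * t * (1 - dl) + t ^+ 2 * K.
Proof.
have hK := K_gt0.
have e1 : t ^+ 2 * K = (1 - dl) ^+ 2 / K by rewrite /t; field; lra.
by rewrite e1 /q2 /t; field; lra.
Qed.

Lemma Bcontr x : hnorm ip (Bop x) <= qq * hnorm ip x.
Proof.
have -> : Bop x = 1%:C%C *: x + (- t)%:C%C *: Aop x.
  by rewrite /Bop rmorph1 scale1r rmorphN scaleNr.
rewrite !hnormE (expandNr hip) -/(N x) -/(N (Aop x)) (ipC hip x (Aop x)) ReJ.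
rewrite /qq -sqrtrM ?q2_ge0 //; apply: ler_wsqrtr.
have h1 := coerc x; have h2 := NA_bound x; rewrite -/K in h2.
have ht := t_gt0; have hK := K_gt0.
rewrite q2E.
have h3 : t ^+ 2 * N (Aop x) <= t ^+ 2 * (K * N x).
  by apply: ler_wpM2l; [exact: sqr_ge0 | exact: h2].
have h4 : 2 * t * ((1 - dl) * N x) <= 2 * t * complex.Re (ip (Aop x) x).
  by apply: ler_wpM2l; [apply: mulr_ge0 => //; exact: ltW | exact: h1].
have h5 := N_ge0 hip x.
rewrite expr1n mul1r. lra.
Qed.

Lemma hnorm0' : hnorm ip 0 = 0.
Proof. by rewrite hnormE /N (ip0l hip); rewrite -[0 : R]sqrtr0; congr Num.sqrt. Qed.

Lemma A_inj x x' : Aop x = Aop x' -> x = x'.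
Proof.
move=> h; apply/eqP; rewrite -subr_eq0; apply/eqP.
have hz : Aop (x - x') = 0 by rewrite AB h subrr.
have := coerc (x - x'); rewrite hz (ip0l hip).
have -> : complex.Re (0 : R[i]) = 0 by [].
move=> h1; clear h hz.
have h2 := N_ge0 hip (x - x').
apply: (N_eq0 hip); apply/eqP; rewrite eq_le; apply/andP; split => //.
move: hd => /andP[d0 d1]. nra.
Qed.

Section Fix.
Variable y : V.
Hypothesis hcomp : ip_complete ip.

Let xs n := iter n (fun v => Bop v + t%:C%C *: y) 0.
Let d n := xs n.+1 - xs n.
Let h0 := hnorm ip (d 0).

Lemma d_step n : d n.+1 = Bop (d n).
Proof. by rewrite /d /xs !iterS zm3 BB. Qed.

Lemma d_bound n : hnorm ip (d n) <= qq ^+ n * h0.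
Proof.
elim: n => [|n IH]; first by rewrite expr0 mul1r.
rewrite d_step; apply: (le_trans (Bcontr _)).
rewrite exprS -mulrA ler_wpM2l //; exact: qq_ge0.
Qed.

Lemma partial n j : (1 - qq) * hnorm ip (xs (n + j) - xs n) <= h0 * (qq ^+ n - qq ^+ (n + j)).
Proof.
elim: j => [|j IH]; first by rewrite addn0 subrr hnorm0' mulr0 subrr mulr0.
have e : xs (n + j.+1) - xs n = d (n + j) + (xs (n + j) - xs n).
  by rewrite addnS /d zm4.
rewrite e.
have hq := qq_lt1; have hq0 := qq_ge0.
have h1 : (1 - qq) * hnorm ip (d (n + j) + (xs (n + j) - xs n)) <=
          (1 - qq) * (hnorm ip (d (n + j)) + hnorm ip (xs (n + j) - xs n)).
  by rewrite ler_wpM2l ?(hnormD hip) //; lra.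
have h2 : (1 - qq) * hnorm ip (d (n + j)) <= (1 - qq) * (qq ^+ (n + j) * h0).
  by rewrite ler_wpM2l ?d_bound //; lra.
rewrite addnS exprS. lra.
Qed.

Lemma xs_cauchy : forall e : R, 0 < e -> exists Nn : nat, forall m n : nat, (Nn <= m)%N -> (Nn <= n)%N ->
        hnorm ip (xs m - xs n) < e.
Proof.
move=> e e0.
have hq := qq_lt1; have hq0 := qq_ge0.
have hh0 : 0 <= h0 by exact: hnorm_ge0.
have h01 : 0 < h0 + 1 by apply: ltr_wpDl.
have hq1 : 0 < 1 - qq by rewrite subr_gt0.
have pos : 0 < e * (1 - qq) / (h0 + 1) by rewrite divr_gt0 ?mulr_gt0.
have hqq : 0 <= qq < 1 by apply/andP.
have [Nn HN] := @geo_small _ qq hqq _ pos.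
have HN' : (h0 + 1) * qq ^+ Nn < e * (1 - qq).
  by rewrite mulrC -ltr_pdivlMr.
have main : forall m n, (Nn <= n)%N -> (n <= m)%N -> hnorm ip (xs m - xs n) < e.
  move=> m n hn hnm.
  have h := partial n (m - n); rewrite subnKC // in h.
  have hmon : qq ^+ n <= qq ^+ Nn by exact: (ler_wiXn2l hq0 (ltW hq) hn).
  have c1 : h0 * (qq ^+ n - qq ^+ m) <= h0 * qq ^+ Nn.
    apply: ler_wpM2l => //; apply: le_trans hmon.
    by rewrite lerBlDr lerDl exprn_ge0.
  have c2 : h0 * qq ^+ Nn <= (h0 + 1) * qq ^+ Nn.
    by rewrite ler_wpM2r ?exprn_ge0 // lerDl.
  have c3 := le_lt_trans (le_trans h (le_trans c1 c2)) HN'.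
  by rewrite [e * _]mulrC ltr_pM2l in c3.
exists Nn => m n hm hn; case: (leqP n m) => hnm.
  exact: main.
by rewrite (hnormB hip); apply: main => //; exact: ltnW.
Qed.

Lemma A_surj : exists x, Aop x = y.
Proof.
have [l hl] := hcomp xs xs_cauchy.
exists l.
set w := l - Bop l - t%:C%C *: y.
have hw : forall e, 0 < e -> hnorm ip w < e + e.
  move=> e e0; have [Nl HNl] := hl e e0.
  have e1 : w = (l - xs Nl.+1) + (Bop (xs Nl) - Bop l).
    by rewrite /w /xs iterS -/(xs Nl) (zm5 _ _ _ (Bop (xs Nl))).
  rewrite e1; apply: (le_lt_trans (hnormD hip _ _)).
  rewrite -BB (hnormB hip l).
  have h1 := HNl Nl.+1 (leqnSn _); have h2 := HNl Nl (leqnn _).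
  have h3 := Bcontr (xs Nl - l).
  have h4 : qq * hnorm ip (xs Nl - l) <= hnorm ip (xs Nl - l).
    by rewrite ler_piMl ?hnorm_ge0 // ltW // qq_lt1.
  by apply: ltrD => //; apply: le_lt_trans h2; exact: le_trans h4.
have w0 : w = 0.
  apply: (hnorm_eq0 hip); apply/eqP; rewrite eq_le hnorm_ge0 andbT.
  rewrite leNgt; apply/negP => hp.
  have h4 : (0:R) < 4 by [].
  have := hw (hnorm ip w / 4) (divr_gt0 hp h4).
  exact: small_pos hp.
move/eqP: w0; rewrite subr_eq0 /Bop zm1 => /eqP h.
have := congr1 (fun v => (t^-1)%:C%C *: v) h; rewrite /= !scalerA -rmorphM mulVf ?rmorph1 ?scale1r //.
by apply/lt0r_neq0; exact: t_gt0.
Qed.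

End Fix.

End Op.

Lemma om_norm {R : realType} (om : R[i]) : `|om| = 1 -> complex.Re om ^+ 2 + complex.Im om ^+ 2 = 1.
Proof.
rewrite normc_def => h.
have := congr1 (@complex.Re R) h => /= h1.
have h0 : 0 <= complex.Re om ^+ 2 + complex.Im om ^+ 2 by rewrite addr_ge0 ?sqr_ge0.
by rewrite -(sqr_sqrtr h0) h1 expr1n.
Qed.

Lemma part1 {R : realType} (dl : R) (hd : 0 < dl < 1) (V : lmodType R[i]) (ip : V -> V -> R[i]) (T : V -> V)
  (adm : admissible dl ip T) (om : R[i]) (hom : `|om| = 1) :
  resolvent_ok om T /\ (opnorm ip (Psi_op dl om T) <= 1%:E)%E.
Proof.
case: adm => [[hip hcomp] hT [M hM] hcl].
have hW : forall x, hnorm ip x = 1 -> G_delta dl (ip (T x) x).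
  by move=> x hx; apply: hcl; apply: subset_closure; exists x.
have hom' := om_norm _ hom.
have inj := A_inj R dl V ip T om hip hT hW hd hom'.
have surj := fun y => A_surj R dl V ip T M om hip hT hM hW hd hom' y hcomp.
have hg : forall y, Aop R V T om (xget 0 [set x | 2 *: x - om *: T x = y]) = y.
  by move=> y; apply: (@xgetPex _ 0 [set x | 2 *: x - om *: T x = y]); exact: surj.
split.
  exists (fun y => xget 0 [set x | 2 *: x - om *: T x = y]) => [x|y]; last exact: hg.
  by apply: inj; rewrite hg.
apply: ge_ereal_sup => _ [y hy <-]; rewrite lee_fin.
rewrite /Psi_op.
set x := xget 0 _.
apply: le_trans hy.
have := hg y; rewrite -/x => <-.
rewrite !hnormE; apply: ler_wsqrtr.
exact: (contr R dl V ip T om hip hT hW hd hom' x).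
Qed.

Section Scalar.
Variable R : realType.
Definition sip (x y : R[i]^o) : R[i] := x * Num.conj y.

Lemma scaleE (a : R[i]) (x : R[i]^o) : a *: x = a * x.
Proof. by []. Qed.

Lemma sip_ip : is_inner_product sip.
Proof.
rewrite /sip; split.
- by move=> a x y z; rewrite scaleE; ring.
- by move=> x y; rewrite rmorphM /= conjCK mulrC.
- by move=> x; exact: mul_conjC_ge0.
- by move=> x /eqP; rewrite mul_conjC_eq0 => /eqP.
Qed.

Definition cmodE (z : R[i]) : cmod z = complex.Re `|z|.
Proof. by rewrite normc_def. Qed.

Lemma Nsip (z : R[i]^o) : complex.Re (sip z z) = complex.Re z ^+ 2 + complex.Im z ^+ 2.
Proof. by rewrite /sip conjE; case: z => a b; simpc; rewrite /= !expr2. Qed.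

Lemma hnorm_sip (z : R[i]^o) : hnorm sip z = cmod z.
Proof. by rewrite /hnorm Nsip. Qed.

Lemma cmod_ge0 (a : R[i]) : 0 <= cmod a.
Proof. exact: sqrtr_ge0. Qed.

Lemma cmodM (a b : R[i]) : cmod (a * b) = cmod a * cmod b.
Proof.
case: a => a1 a2; case: b => b1 b2; rewrite /cmod; simpc => /=.
rewrite -sqrtrM ?addr_ge0 ?sqr_ge0 //; congr Num.sqrt; ring.
Qed.

Lemma cmod0 : cmod (0 : R[i]) = 0.
Proof. by rewrite /cmod /= expr0n /= addr0 sqrtr0. Qed.

Lemma cmod_eq0 (a : R[i]) : cmod a = 0 -> a = 0.
Proof.
case: a => a1 a2; rewrite /cmod /= => /eqP; rewrite sqrtr_eq0 => h.
have h1 := sqr_ge0 a1; have h2 := sqr_ge0 a2.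
have e1 : a1 ^+ 2 = 0 by lra.
have e2 : a2 ^+ 2 = 0 by lra.
by move/eqP: e1; rewrite sqrf_eq0 => /eqP ->; move/eqP: e2; rewrite sqrf_eq0 => /eqP ->.
Qed.

Lemma cmod_div (a b : R[i]) : cmod (a / b) = cmod a / cmod b.
Proof.
have [->|b0] := eqVneq b 0; first by rewrite invr0 mulr0 cmod0 invr0 mulr0.
have cb : cmod b != 0 by apply/eqP => /cmod_eq0; apply/eqP.
apply: (mulIf cb); rewrite -cmodM divfK // divfK //.
Qed.



Lemma real_complete (u : nat -> R) :
  (forall e : R, 0 < e -> exists N : nat, forall m n : nat, (N <= m)%N -> (N <= n)%N -> `|u m - u n| < e) ->
  exists l : R, forall e : R, 0 < e -> exists N : nat, forall n : nat, (N <= n)%N -> `|u n - l| < e.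
Proof.
move=> hc.
have : cvg (u @ \oo).
  apply: cauchy_cvg; apply: cauchy_exP => e e0.
  have [N HN] := hc e e0.
  exists (u N); exists N => // n /= Nn.
  by rewrite /ball /= HN.
move=> /cvgrPdist_lt hl; exists (lim (u @ \oo)) => e e0.
have [N _ HN] := hl e e0; exists N => n Nn.
by rewrite distrC; exact: HN.
Qed.

Lemma Re_le_cmod (z : R[i]) : `|complex.Re z| <= cmod z.
Proof. by rewrite -sqrtr_sqr; apply: ler_wsqrtr; rewrite lerDl sqr_ge0. Qed.
Lemma Im_le_cmod (z : R[i]) : `|complex.Im z| <= cmod z.
Proof. by rewrite -sqrtr_sqr; apply: ler_wsqrtr; rewrite lerDr sqr_ge0. Qed.
Lemma cmod_le (a b : R) : cmod (a +i* b)%C <= `|a| + `|b|.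
Proof.
rewrite /cmod /= -(ger0_norm (addr_ge0 (normr_ge0 a) (normr_ge0 b))) -sqrtr_sqr.
apply: ler_wsqrtr.
have ea : a ^+ 2 = `|a| ^+ 2 by rewrite real_normK ?num_real.
have eb : b ^+ 2 = `|b| ^+ 2 by rewrite real_normK ?num_real.
rewrite ea eb sqrrD.
have := normr_ge0 a; have := normr_ge0 b; move: (`|a|) (`|b|) => x y hx hy.
nra.
Qed.

Lemma sip_complete : ip_complete sip.
Proof.
move=> u hu.
have [lr hr] : exists l : R, forall e : R, 0 < e -> exists N : nat, forall n : nat, (N <= n)%N -> `|complex.Re (u n) - l| < e.
  apply: real_complete => e e0; have [N HN] := hu e e0; exists N => m n hm hn.
  apply: le_lt_trans (HN m n hm hn); rewrite hnorm_sip.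
  have -> : complex.Re (u m) - complex.Re (u n) = complex.Re (u m - u n) by case: (u m); case: (u n).
  exact: Re_le_cmod.
have [li hi] : exists l : R, forall e : R, 0 < e -> exists N : nat, forall n : nat, (N <= n)%N -> `|complex.Im (u n) - l| < e.
  apply: real_complete => e e0; have [N HN] := hu e e0; exists N => m n hm hn.
  apply: le_lt_trans (HN m n hm hn); rewrite hnorm_sip.
  have -> : complex.Im (u m) - complex.Im (u n) = complex.Im (u m - u n) by case: (u m); case: (u n).
  exact: Im_le_cmod.
exists (lr +i* li)%C => e e0.
have e2 : 0 < e / 2 by rewrite divr_gt0.
have [N1 H1] := hr _ e2; have [N2 H2] := hi _ e2.
exists (maxn N1 N2) => n hn; rewrite hnorm_sip.
have -> : u n - (lr +i* li)%C = ((complex.Re (u n) - lr) +i* (complex.Im (u n) - li))%C by case: (u n).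
apply: le_lt_trans (cmod_le _ _) _.
have := H1 n (leq_trans (leq_maxl _ _) hn); have := H2 n (leq_trans (leq_maxr _ _) hn).
move=> a b; have -> : e = e / 2 + e / 2 by field.
exact: ltrD.
Qed.

Variable dl : R.
Hypothesis hd : 0 < dl < 1.
Variable om : R[i].
Hypothesis hom : `|om| = 1.
Variable lam : R[i].
Hypothesis hlam : G_delta dl lam.

Definition Tl := fun x : R[i]^o => (lam * x : R[i]^o).

Lemma Tl_lin : linear Tl.
Proof. move=> a u v /=. rewrite /Tl /GRing.scale /=. ring. Qed.

Lemma Tl_adm : admissible dl sip Tl.
Proof.
split.
- split; [exact: sip_ip | exact: sip_complete].
- exact: Tl_lin.
- by exists (cmod lam) => x; rewrite /Tl !hnorm_sip cmodM.
- have sub : (numrange sip Tl : set R[i]^o) `<=` ([set lam] : set R[i]^o).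
    move=> _ [x hx <-]; rewrite /= /Tl.
    have h1 : sip x x = 1.
      rewrite (ipxx_real sip_ip) -(hnorm_sq sip_ip) hx expr1n //.
    by rewrite /sip -mulrA -/(sip x x) h1 mulr1.
  move=> z /(closureS sub).
  have -> : closure ([set lam] : set R[i]^o) = [set lam].
    symmetry; apply/closure_id.
    apply: compact_closed; last exact: compact_set1.
    exact: norm_hausdorff.
  by move=> ->.
Qed.

Let p := complex.Re om.
Let q := complex.Im om.

Lemma den_ne0 : 2 - om * lam != 0.
Proof.
apply/negP => /eqP h.
have hom' := om_norm _ hom.
have h1 : complex.Re (om * lam) = 2.
  by rewrite -(subr0_eq h) two_C.
have e : complex.Re (om * lam) = p * complex.Re lam - q * complex.Im lam.
  by rewrite /p /q; case: om => a b; case: lam => c d.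
have hG : complex.Re lam ^+ 2 / (1 + dl) ^+ 2 + complex.Im lam ^+ 2 / (1 - dl) ^+ 2 <= 1 ^+ 2.
  by rewrite expr1n; apply: ltW; exact: hlam.
have := RL2 hd hom' hG ler01; rewrite -e h1 mulr1 ger0_norm // => h2.
clear h h1 e hG hom'.
move: hd => /andP[d0 d1]; lra.
Qed.


Lemma Psi_op_scalar (y : R[i]^o) : Psi_op dl om Tl y = Psi dl om lam * y.
Proof.
have dn := den_ne0.
rewrite /Psi_op /Psi.
set x := xget 0 _.
have hx : 2 *: x - om *: Tl x = y.
  apply: (@xgetPex _ 0 [set x : R[i]^o | 2 *: x - om *: Tl x = y]).
  exists (y / (2 - om * lam)); rewrite /= !scaleE /Tl; field; exact: dn.
move: hx; rewrite !scaleE /Tl => <-; field; exact: dn.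
Qed.

Lemma cmod1 : cmod (1 : R[i]) = 1.
Proof. by rewrite /cmod /= expr1n expr0n /= addr0 sqrtr1. Qed.

Lemma opnorm_scalar : opnorm sip (Psi_op dl om Tl) = (cmod (Psi dl om lam))%:E.
Proof.
apply/eqP; rewrite eq_le; apply/andP; split.
  apply: ge_ereal_sup => _ [y hy <-]; rewrite lee_fin Psi_op_scalar hnorm_sip cmodM.
  move: hy; rewrite /= hnorm_sip => hy; apply: ler_piMr => //; exact: cmod_ge0.
apply: ereal_sup_ubound; exists 1.
  by rewrite /= hnorm_sip cmod1.
by rewrite Psi_op_scalar mulr1 hnorm_sip.
Qed.

End Scalar.

Lemma ReMul {R : realType} (w z : R[i]) : complex.Re (w * z) = complex.Re w * complex.Re z - complex.Im w * complex.Im z.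
Proof. by case: w => a b; case: z => c d. Qed.
Lemma ImMul {R : realType} (w z : R[i]) : complex.Im (w * z) = complex.Re w * complex.Im z + complex.Im w * complex.Re z.
Proof. by case: w => a b; case: z => c d. Qed.
Lemma ReSub {R : realType} (w z : R[i]) : complex.Re (w - z) = complex.Re w - complex.Re z.
Proof. by case: w => a b; case: z => c d. Qed.
Lemma ImSub {R : realType} (w z : R[i]) : complex.Im (w - z) = complex.Im w - complex.Im z.
Proof. by case: w => a b; case: z => c d. Qed.
Lemma Re2 {R : realType} : complex.Re (2 : R[i]) = 2. Proof. by rewrite two_C. Qed.
Lemma Im2 {R : realType} : complex.Im (2 : R[i]) = 0. Proof. by rewrite two_C. Qed.
Lemma ReC {R : realType} (a : R) : complex.Re (a%:C%C) = a. Proof. by []. Qed.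
Lemma ImC {R : realType} (a : R) : complex.Im (a%:C%C) = 0. Proof. by []. Qed.

Lemma cmod_sq {R : realType} (z : R[i]) : cmod z ^+ 2 = complex.Re z ^+ 2 + complex.Im z ^+ 2.
Proof. by rewrite /cmod sqr_sqrtr // addr_ge0 ?sqr_ge0. Qed.

Lemma approx {R : realType} (dl : R) (hd : 0 < dl < 1) (om : R[i]) (hom : `|om| = 1) (e : R) :
  0 < e < 1 -> exists2 lam, G_delta dl lam & 1 - e <= cmod (Psi dl om lam).
Proof.
move=> /andP[e0 e1]; have hom' := om_norm _ hom; clear hom; move: hd => /andP[d0 d1].
set p := complex.Re om in hom' *; set q := complex.Im om in hom' *.
set r := 1 - e * (1 - dl) / (4 * (1 + dl)).
have hr1 : r < 1.
  rewrite /r ltrBlDr ltrDl; apply: divr_gt0; [apply: mulr_gt0 | ]; lra.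
have hr0 : 0 <= r.
  rewrite /r subr_ge0 ler_pdivrMr; last lra.
  nra.
set c := r * (1 + dl) * p; set d := - (r * (1 - dl) * q).
exists (c +i* d)%C.
  rewrite /G_delta /= /c /d.
  have -> : (r * (1 + dl) * p) ^+ 2 / (1 + dl) ^+ 2 + (- (r * (1 - dl) * q)) ^+ 2 / (1 - dl) ^+ 2
     = r ^+ 2 * (p ^+ 2 + q ^+ 2) by field; lra.
  rewrite hom' mulr1; nra.
rewrite /Psi cmod_div.
set A := cmod (2 - om * (c +i* d)%C).
set B := cmod (2 * om * dl%:C%C - (c +i* d)%C).
have hA0 : 0 <= A by exact: sqrtr_ge0.
have hB0 : 0 <= B by exact: sqrtr_ge0.
have hA2 : A ^+ 2 = (2 - (p * c - q * d)) ^+ 2 + (p * d + q * c) ^+ 2.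
  by rewrite /A cmod_sq ReSub ImSub Re2 Im2 ReMul ImMul -/p -/q /=; ring.
have hB2 : B ^+ 2 = (2 * dl * p - c) ^+ 2 + (2 * dl * q - d) ^+ 2.
  rewrite /B cmod_sq ReSub ImSub !ReMul !ImMul Re2 Im2 ReC ImC -/p -/q /=; ring.
have key : A ^+ 2 - B ^+ 2 = 4 - 4 * dl ^+ 2 * (p^+2 + q^+2) - 4 * (1 - dl ^+ 2) * r * (p^+2 + q^+2)
   + (p^+2 + q^+2 - 1) * (c ^+ 2 + d ^+ 2).
  rewrite hA2 hB2 /c /d; ring.
rewrite hom' subrr mul0r addr0 !mulr1 in key.
have e4 : 4 * (1 - dl ^+ 2) * (1 - r) = e * (1 - dl) ^+ 2.
  rewrite /r; field; lra.
have hRe : 1 - dl <= 2 - (p * c - q * d).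
  rewrite /c /d.
  have : p * (r * (1 + dl) * p) - q * - (r * (1 - dl) * q) <= r * (1 + dl) * (p ^+ 2 + q ^+ 2).
    have := sqr_ge0 q; have := sqr_ge0 p; nra.
  rewrite hom' mulr1; nra.
have hA : (1 - dl) ^+ 2 <= A ^+ 2.
  rewrite hA2; have := sqr_ge0 (p * d + q * c); nra.
have hApos : 0 < A.
  rewrite lt_neqAle hA0 andbT; apply/eqP => hA00; rewrite -hA00 in hA; nra.
have hB2' : (1 - e) * A ^+ 2 <= B ^+ 2 by nra.
have hB : (1 - e) * A <= B by nra.
by rewrite ler_pdivlMr.
Qed.


Theorem lemma4p3 (R : realType) (delta : R) (hdelta : 0 < delta < 1) :
  (forall (V : lmodType R[i]) (ip : V -> V -> R[i]) (T : V -> V),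
     admissible delta ip T ->
     forall omega : R[i], `|omega| = 1 ->
       resolvent_ok omega T /\
       (opnorm ip (Psi_op delta omega T) <= 1%:E)%E) /\
  (forall omega : R[i], `|omega| = 1 ->
     bfd_norm_Psi delta omega = 1%:E /\ 1%:E = sup_Psi_G delta omega).
Proof.
split.
  by move=> V ip T adm om hom; exact: (@part1 R delta hdelta _ _ _ adm om hom).
move=> om hom.
have ub : (bfd_norm_Psi delta om <= 1%:E)%E.
  apply: ge_ereal_sup => _ [V [ip [T [adm ->]]]].
  exact: (@part1 R delta hdelta _ _ _ adm om hom).2.
have lb : (sup_Psi_G delta om <= bfd_norm_Psi delta om)%E.
  apply: ereal_sup_le => _ [lam hlam <-].
  exists (R[i]^o); exists (sip R); exists (Tl R lam); split.
    exact: (Tl_adm R delta lam hlam).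
  by rewrite (opnorm_scalar R delta hdelta om hom lam hlam).
have g1 : (1%:E <= sup_Psi_G delta om)%E.
  apply/lee_subgt0Pr => e e0.
  rewrite -EFinB.
  have [e1|e1] := ltP e 1.
    have [lam hlam hle] := approx delta hdelta om hom e (ltac:(by apply/andP; split)).
    apply: le_ereal_sup_tmp; exists (cmod (Psi delta om lam))%:E; last by rewrite lee_fin.
    by exists lam.
  apply: le_ereal_sup_tmp; exists (cmod (Psi delta om 0))%:E.
    exists 0 => //; rewrite /G_delta /=.
    by rewrite expr0n /= !mul0r addr0 ltr01.
  rewrite lee_fin; apply: le_trans (cmod_ge0 _ _); lra.
split; apply/eqP; rewrite eq_le.
  by rewrite ub /=; exact: le_trans g1 lb.
by rewrite g1 /=; exact: le_trans lb ub.
Qed.
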